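(* For $n\ge1$ let $Q_n$ be the number of domino tilings of $K_{1,3}\times P_{2n}$, and let $T_n$ be the number of domino tilings of $C_3\times P_{2n}$. For $n\ge0$ let $q_n$ be the number of domino tilings of the graph obtained from $K_{1,3}\times P_{2n+1}$ by deleting two leaf-vertices of the end copy $K_{1,3}\times\{1\}$. Let $t_n$ be the number of domino tilings of the graph obtained from $C_3\times P_{2n+1}$ by deleting one vertex of the end copy $C_3\times\{1\}$. Then $Q_n=T_n$ for all $n\ge1$ and $q_n=t_n$ for all $n\ge0$.
   Context: $H\times K$ denotes the Cartesian product of graphs. $P_m$ is the path with vertex set $\{1,\dots,m\}$. $C_3$ is the triangle and $K_{1,3}$ is the star with one center and three leaves. A domino tiling of a finite graph is a perfect matching, and the number of domino tilings is the number of perfect matchings. *)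

(* Defs.v *)
From mathcomp Require Import all_boot.
Set Implicit Arguments. Unset Strict Implicit. Unset Printing Implicit Defensive.

(* A finite simple graph is given by a vertex set A : {set V} inside a finType V
   and a symmetric irreflexive edge relation e : rel V (only edges between
   vertices of A count).  Induced subgraphs (vertex deletion) shrink A. *)

Definition is_perfect_matching (V : finType) (A : {set V}) (e : rel V)
    (M : {set {set V}}) : bool :=
  [forall B in M, exists x, exists y,
      [&& B == [set x; y], x != y, e x y, x \in A & y \in A]]
  && [forall x in A, #|[set B in M | x \in B]| == 1].

(* number of domino tilings = number of perfect matchings *)
Definition num_tilings (V : finType) (A : {set V}) (e : rel V) : nat :=
  #|[set M : {set {set V}} | is_perfect_matching A e M]|.

Definition cart_rel (V W : finType) (e1 : rel V) (e2 : rel W) : rel (V * W) :=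
  fun p q => ((p.1 == q.1) && e2 p.2 q.2) || ((p.2 == q.2) && e1 p.1 q.1).

(* Path P_m on 'I_m: index i : 'I_m stands for vertex i+1 of {1,...,m}. *)
Definition path_rel (m : nat) : rel 'I_m :=
  fun i j => (i.+1 == j :> nat) || (j.+1 == i :> nat).

Definition C3_rel : rel 'I_3 := fun x y => x != y.

(* Star K_{1,3} on 'I_4: center 0, leaves 1,2,3 *)
Definition K13_rel : rel 'I_4 := fun x y => (x == 0 :> nat) != (y == 0 :> nat).

Definition Qn (n : nat) : nat :=
  num_tilings [set: 'I_4 * 'I_(2 * n)] (cart_rel K13_rel (@path_rel (2 * n))).

Definition Tn (n : nat) : nat :=
  num_tilings [set: 'I_3 * 'I_(2 * n)] (cart_rel C3_rel (@path_rel (2 * n))).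

Definition qn (n : nat) : nat :=
  num_tilings
    [set p : 'I_4 * 'I_(2 * n + 1) |
       ~~ ((p.2 == 0 :> nat) && ((p.1 == 1 :> nat) || (p.1 == 2 :> nat)))]
    (cart_rel K13_rel (@path_rel (2 * n + 1))).

Definition tn (n : nat) : nat :=
  num_tilings
    [set p : 'I_3 * 'I_(2 * n + 1) |
       ~~ ((p.2 == 0 :> nat) && (p.1 == 0 :> nat))]
    (cart_rel C3_rel (@path_rel (2 * n + 1))).

(* Main.v *)
Require Import Defs.
From mathcomp Require Import all_boot zify.
Set Implicit Arguments. Unset Strict Implicit. Unset Printing Implicit Defensive.

Lemma pm_block (W : finType) (A : {set W}) e M B :
  is_perfect_matching A e M -> B \in M ->
  exists x y, [/\ B = [set x; y], x != y, e x y, x \in A & y \in A].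
Proof.
case/andP=> /forall_inP H _ /H /existsP[x /existsP[y /and5P[/eqP-> ? ? ? ?]]].
by exists x, y.
Qed.

Lemma pm_uniq (W : finType) (A : {set W}) e M z :
  is_perfect_matching A e M -> z \in A ->
  exists2 B, B \in M & z \in B /\ forall B', B' \in M -> z \in B' -> B' = B.
Proof.
case/andP=> _ /forall_inP H /H /cards1P[B EB].
have : B \in [set B in M | z \in B] by rewrite EB set11.
rewrite inE => /andP[BM zB]; exists B => //; split=> // B' B'M zB'.
by apply/set1P; rewrite -EB inE B'M.
Qed.

Lemma pm_sub (W : finType) (A : {set W}) e M B :
  is_perfect_matching A e M -> B \in M -> B \subset A.
Proof.
move=> H /(pm_block H)[a [b [-> _ _ aA bA]]].
by apply/subsetP=> z /set2P[]->.
Qed.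

Lemma pm_remove (W : finType) (A : {set W}) (e : rel W) M x y :
  is_perfect_matching A e M -> [set x; y] \in M -> x != y ->
  is_perfect_matching (A :\ x :\ y) e (M :\ [set x; y]).
Proof.
move=> H xyM nxy.
have Hx : forall B, B \in M -> x \in B -> B = [set x; y].
  have xA : x \in A by apply: (subsetP (pm_sub H xyM)); rewrite set21.
  case: (pm_uniq H xA) => B0 _ [_ U] B BM xB.
  by rewrite (U _ BM xB) (U _ xyM (set21 _ _)).
have Hy : forall B, B \in M -> y \in B -> B = [set x; y].
  have yA : y \in A by apply: (subsetP (pm_sub H xyM)); rewrite set22.
  case: (pm_uniq H yA) => B0 _ [_ U] B BM yB.
  by rewrite (U _ BM yB) (U _ xyM (set22 _ _)).
apply/andP; split.
  apply/forall_inP=> B; rewrite !inE => /andP[nB BM].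
  case: (pm_block H BM) => a [b [EB nab eab aA bA]].
  apply/existsP; exists a; apply/existsP; exists b.
  rewrite EB eqxx nab eab /=.
  have ax : a != x by apply/eqP=> ax0; move: nB; rewrite (Hx _ BM) ?eqxx // EB ax0 set21.
  have ay : a != y by apply/eqP=> ax0; move: nB; rewrite (Hy _ BM) ?eqxx // EB ax0 set21.
  have bx : b != x by apply/eqP=> ax0; move: nB; rewrite (Hx _ BM) ?eqxx // EB ax0 set22.
  have b_y : b != y by apply/eqP=> ax0; move: nB; rewrite (Hy _ BM) ?eqxx // EB ax0 set22.
  by rewrite !inE ax ay bx b_y aA bA.
apply/forall_inP=> z; rewrite !inE => /and3P[zy zx zA].
case/andP: H => _ /forall_inP /(_ _ zA) /eqP <-.
apply/eqP; apply: eq_card => B; rewrite !inE.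
case: (boolP (B == [set x; y])) => //= /eqP ->.
by rewrite !inE (negPf zx) (negPf zy) andbF.
Qed.

Lemma pm_add (W : finType) (A : {set W}) (e : rel W) M x y :
  is_perfect_matching (A :\ x :\ y) e M -> x \in A -> y \in A -> x != y -> e x y ->
  is_perfect_matching A e ([set x; y] |: M).
Proof.
move=> H xA yA nxy exy.
have nx : forall B, B \in M -> x \notin B.
  move=> B BM; apply/negP=> /(subsetP (pm_sub H BM)); by rewrite !inE eqxx andbF.
have ny : forall B, B \in M -> y \notin B.
  move=> B BM; apply/negP=> /(subsetP (pm_sub H BM)); by rewrite !inE eqxx.
apply/andP; split.
  apply/forall_inP=> B; rewrite !inE => /orP[/eqP->|BM].
    by apply/existsP; exists x; apply/existsP; exists y; rewrite eqxx nxy exy xA yA.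
  case: (pm_block H BM) => a [b [EB nab eab aA bA]].
  apply/existsP; exists a; apply/existsP; exists b.
  by rewrite EB eqxx nab eab; move: aA bA; rewrite !inE => /and3P[_ _ ->] /and3P[_ _ ->].
apply/forall_inP=> z zA.
case: (eqVneq z x) => [->|zx].
  rewrite -(cards1 [set x; y]); apply/eqP; apply: eq_card => B; rewrite !inE.
  case: (eqVneq B [set x; y]) => [->|/=]; first by rewrite set21.
  by move=> _; case: (boolP (B \in M)) => // /nx /negPf.
case: (eqVneq z y) => [->|zy].
  rewrite -(cards1 [set x; y]); apply/eqP; apply: eq_card => B; rewrite !inE.
  case: (eqVneq B [set x; y]) => [->|/=]; first by rewrite set22.
  by move=> _; case: (boolP (B \in M)) => // /ny /negPf.
case/andP: H => _ /forall_inP; have zA' : z \in A :\ x :\ y by rewrite !inE zx zy zA.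
move=> /(_ _ zA') /eqP <-; apply/eqP; apply: eq_card => B; rewrite !inE.
case: (eqVneq B [set x; y]) => //= ->.
by rewrite !inE (negPf zx) (negPf zy) /=; case: (_ \in M).
Qed.

Lemma sum_bool_card (T : finType) (S : {pred T}) (P : pred T) :
  \sum_(i in S) (P i : nat) = #|[set i in S | P i]|.
Proof.
rewrite -sum1_card.
rewrite [RHS](eq_bigl (fun i => (i \in S) && P i)); last by move=> i; rewrite inE.
rewrite [RHS]big_mkcondr; apply: eq_bigr => i _; by case: (P i).
Qed.

Lemma ve (W : finType) (A : {set W}) (e : rel W) x :
  symmetric e -> x \in A ->
  num_tilings A e = \sum_(y in A | e x y && (y != x)) num_tilings (A :\ x :\ y) e.
Proof.
move=> esy xA.
have part : forall y, y \in A -> e x y -> y != x ->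
    num_tilings (A :\ x :\ y) e = #|[set M in [set M | is_perfect_matching A e M] | [set x; y] \in M]|.
  move=> y yA exy nyx.
  rewrite /num_tilings.
  have -> : [set M in [set M | is_perfect_matching A e M] | [set x; y] \in M] =
     (fun M => [set x; y] |: M) @: [set M | is_perfect_matching (A :\ x :\ y) e M].
    apply/setP=> M; rewrite !inE; apply/andP/imsetP.
      case=> H xyM; exists (M :\ [set x; y]); first by rewrite inE pm_remove // eq_sym.
      by rewrite setD1K.
    case=> M'; rewrite inE => H ->; split; last by rewrite !inE eqxx.
    by apply: pm_add => //; rewrite eq_sym.
  apply/esym/card_in_imset => M1 M2; rewrite !inE => H1 H2 E.
  have nx : forall M, is_perfect_matching (A :\ x :\ y) e M -> [set x; y] \notin M.
    move=> M H; apply/negP=> /(pm_sub H) /subsetP /(_ x (set21 _ _)).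
    by rewrite !inE eqxx andbF.
  by rewrite -(setU1K (nx _ H1)) -(setU1K (nx _ H2)) E.
rewrite (eq_bigr (fun y => #|[set M in [set M | is_perfect_matching A e M] | [set x; y] \in M]|)); last first.
  by move=> y /andP[yA /andP[exy nyx]]; rewrite part.
rewrite /num_tilings.
under eq_bigr do rewrite -sum_bool_card.
rewrite exchange_big /= -sum1_card.
apply: eq_bigr => M; rewrite inE => H.
case: (pm_uniq H xA) => B BM [xB U].
case: (pm_block H BM) => a [b [EB nab eab aA bA]].
have [y0 [EB0 y0A exy0 ny0]] : exists y0, [/\ B = [set x; y0], y0 \in A, e x y0 & y0 != x].
  move: xB; rewrite EB => /set2P[->|->].
    by exists b; rewrite eq_sym.
  by exists a; rewrite setUC esy eab.
rewrite (bigD1 y0) /=; last by rewrite y0A exy0 ny0.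
rewrite -EB0 BM big1 // => y /andP[/andP[yA /andP[exy nyx]] ny].
suff -> : ([set x; y] \in M) = false by []; apply/negbTE; apply/negP=> /U /(_ (set21 _ _)) E.
have : y \in B by rewrite -E set22.
by rewrite EB0 => /set2P[] /eqP; rewrite ?(negPf nyx) ?(negPf ny).
Qed.

Lemma nt0 (W : finType) (e : rel W) : num_tilings (set0 : {set W}) e = 1.
Proof.
rewrite /num_tilings -(cards1 (set0 : {set {set W}})); apply: eq_card => M.
rewrite !inE; apply/idP/eqP => [/andP[/forall_inP H _]|->].
  apply/setP=> B; rewrite inE; apply/negP=> /H /existsP[a /existsP[b /and5P[_ _ _]]].
  by rewrite inE.
by apply/andP; split; apply/forall_inP=> z; rewrite inE.
Qed.

Definition Xs (V : finType) (m : nat) (L : nat -> {set V}) (k : nat) (R S : {set V})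
  : {set V * 'I_m} :=
  [set p : V * 'I_m | (p.1 \in L p.2) && ((p.2 < k) || ((p.2 == k :> nat) && (p.1 \in S))
                              || ((p.2 == k.+1 :> nat) && (p.1 \in R)))].

Definition Ys (V : finType) (m : nat) (L : nat -> {set V}) (k : nat) (S : {set V})
  : {set V * 'I_m} :=
  [set p : V * 'I_m | (p.1 \in L p.2) && ((p.2 < k) || ((p.2 == k :> nat) && (p.1 \in S)))].

Lemma cart_sym (V W : finType) (e1 : rel V) (e2 : rel W) :
  symmetric e1 -> symmetric e2 -> symmetric (cart_rel e1 e2).
Proof. by move=> s1 s2 p q; rewrite /cart_rel s1 s2 (eq_sym p.1) (eq_sym p.2). Qed.

Lemma path_sym m : symmetric (@path_rel m).
Proof. by move=> i j; rewrite /path_rel orbC. Qed.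

Lemma stepX (V : finType) (e : rel V) (m : nat) (L : nat -> {set V}) k (R S : {set V}) x :
  symmetric e -> k.+1 < m -> x \in R -> x \in L k.+1 ->
  num_tilings (Xs m L k R S) (cart_rel e (@path_rel m)) =
  \sum_(y in R | (y \in L k.+1) && e x y && (y != x))
      num_tilings (Xs m L k (R :\ x :\ y) S) (cart_rel e (@path_rel m))
  + (if (x \in S) && (x \in L k) then
       num_tilings (Xs m L k (R :\ x) (S :\ x)) (cart_rel e (@path_rel m)) else 0).
Proof.
move=> es km xR xL.
have km' : k < m by apply: ltnW.
set i1 := Ordinal km; set i0 := Ordinal km'.
set E := cart_rel e (@path_rel m).
have pxX : (x, i1) \in Xs m L k R S by rewrite inE /= xL xR eqxx !orbT.
rewrite (ve (cart_sym es (@path_sym m)) pxX) big_mkcond /=.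
set F := (fun y i => if [&& (y, i) \in Xs m L k R S, E (x, i1) (y, i) & ((y, i) != (x, i1))]
   then num_tilings (Xs m L k R S :\ (x, i1) :\ (y, i)) E else 0).
rewrite (eq_bigr (fun q => F q.1 q.2)); last by move=> [a i] _.
rewrite -(pair_bigA _ F) /F /=.
rewrite (bigD1 x) //= [in RHS]big_mkcond /= [in RHS](bigD1 x) //= eqxx !andbF add0n addnC.
congr (_ + _).
  apply: eq_bigr => y nyx.
  have nxy : (x == y) = false by rewrite eq_sym (negPf nyx).
  rewrite (bigD1 i1) //= big1 ?addn0; last first.
    by move=> i ni; rewrite /E /cart_rel /= nxy /= (eq_sym i1) (negPf ni) !andbF.
  rewrite /E /cart_rel /= nxy eqxx /= xpair_eqE (negPf nyx) /= inE /=.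
  have f1 : (k.+1 < k) = false by rewrite ltnNge leqnSn.
  have f2 : (k.+1 == k) = false by apply/negbTE; rewrite neq_ltn ltnSn orbT.
  rewrite f1 f2 eqxx /= !andbT.
  have -> : [&& y \in R, y \in L k.+1 & e x y] = (y \in L k.+1) && (y \in R) && e x y.
    by case: (y \in R); case: (y \in L k.+1).
  case: ifP => _; last reflexivity.
  apply: (f_equal (fun A => num_tilings A _)); apply/setP=> [[a i]]; rewrite !inE /= !xpair_eqE.
  rewrite -!val_eqE /=.
  case: (eqVneq (i : nat) k.+1) => [->|ne] /=.
    rewrite f1 f2 /=.
    by case: (a == y); case: (a == x); case: (a \in L k.+1); case: (a \in R).
  by rewrite !andbF.
have f1 : (k.+1 < k) = false by rewrite ltnNge leqnSn.
have f2 : (k.+1 == k) = false by apply/negbTE; rewrite neq_ltn ltnSn orbT.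
have f3 : (k == k.+1) = false by rewrite eq_sym.
rewrite (bigD1 i0) //= big1 ?addn0; last first.
  move=> i ni.
  have hi : (i : nat) != k by apply: contra ni => /eqP hk; apply/eqP/val_inj.
  case: (eqVneq i i1) => [->|ni1]; first by rewrite eqxx !andbF.
  rewrite /E /cart_rel /path_rel /= eqxx (eq_sym i1) (negPf ni1) /= eqSS (negPf hi) !orbF.
  case: (eqVneq k.+2 (i : nat)) => [E2|]; last by rewrite /= andbF.
  have g1 : (k.+2 < k) = false by apply/negbTE/negP; lia.
  have g2 : (k.+2 == k) = false by apply/negbTE/negP; lia.
  have g3 : (k.+2 == k.+1) = false by apply/negbTE/negP; lia.
  by rewrite inE /= -E2 g1 g2 g3 !andbF.
have -> : ((x, i0) != (x, i1)) = true by rewrite xpair_eqE negb_and -val_eqE /= f3 orbT.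
rewrite /E /cart_rel /path_rel /= eqxx /= eqxx orbT /= inE /= ltnn eqxx f3 /= !andbT orbF andbC.
case: ifP => _; last reflexivity.
apply: (f_equal (fun A => num_tilings A _)); apply/setP=> [[a i]]; rewrite !inE /= !xpair_eqE -!val_eqE /=.
case: (eqVneq (i : nat) k.+1) => [->|ne] /=.
  rewrite f1 f2 /=.
  by case: (a == x); case: (a \in L k.+1); case: (a \in R).
case: (eqVneq (i : nat) k) => [->|ne2] /=.
  rewrite ltnn /=.
  by case: (a == x); case: (a \in L k); case: (a \in S).
by rewrite !andbF.
Qed.

Lemma X0S (V : finType) m (L : nat -> {set V}) k S :
  Xs m L k set0 S = Ys m L k S.
Proof. by apply/setP=> p; rewrite !inE andbF orbF. Qed.

Lemma XT (V : finType) m (L : nat -> {set V}) k R :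
  Xs m L k R setT = Ys m L k.+1 R.
Proof.
apply/setP=> p; rewrite !inE andbT; congr (_ && (_ || _)).
by rewrite [in RHS]ltnS [in RHS]leq_eqVlt orbC.
Qed.

Lemma Y0_notL (V : finType) m (L : nat -> {set V}) R x :
  x \notin L 0 -> Ys m L 0 R = Ys m L 0 (R :\ x).
Proof.
move=> xL; apply/setP=> [[a i]]; rewrite !inE /=.
case: (eqVneq (i : nat) 0) => [->|] /=; last by rewrite !andbF.
by case: (eqVneq a x) => [->|nx] /=; [rewrite (negPf xL) | ].
Qed.

Lemma Y00 (V : finType) m (L : nat -> {set V}) :
  Ys m L 0 set0 = set0.
Proof. by apply/setP=> p; rewrite !inE andbF orbF ltn0 andbF. Qed.

Lemma stepY0 (V : finType) (e : rel V) (m : nat) (L : nat -> {set V}) (R : {set V}) x :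
  symmetric e -> 0 < m -> x \in R -> x \in L 0 ->
  num_tilings (Ys m L 0 R) (cart_rel e (@path_rel m)) =
  \sum_(y in R | (y \in L 0) && e x y && (y != x))
      num_tilings (Ys m L 0 (R :\ x :\ y)) (cart_rel e (@path_rel m)).
Proof.
move=> es m0 xR xL.
set i0 := Ordinal m0.
set E := cart_rel e (@path_rel m).
have pxX : (x, i0) \in Ys m L 0 R by rewrite inE /= xL xR.
rewrite (ve (cart_sym es (@path_sym m)) pxX) big_mkcond /=.
set F := (fun y i => if [&& (y, i) \in Ys m L 0 R, E (x, i0) (y, i) & ((y, i) != (x, i0))]
   then num_tilings (Ys m L 0 R :\ (x, i0) :\ (y, i)) E else 0).
rewrite (eq_bigr (fun q => F q.1 q.2)); last by move=> [a i] _.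
rewrite -(pair_bigA _ F) /F /=.
rewrite [in RHS]big_mkcond /=.
apply: eq_bigr => y _.
rewrite (bigD1 i0) //= big1 ?addn0; last first.
  move=> i ni.
  have hi : (i : nat) != 0 by apply: contra ni => /eqP hk; apply/eqP/val_inj.
  by rewrite inE /= (negPf hi) !andbF.
case: (eqVneq y x) => [->|nyx]; first by rewrite !eqxx !andbF.
have -> : ((y, i0) != (x, i0)) by apply: contra nyx => /eqP [->].
rewrite /E /cart_rel /= eq_sym (negPf nyx) /= inE /= !andbT.
have -> : (y \in L 0) && (y \in R) && e x y = [&& y \in R, y \in L 0 & e x y].
  by case: (y \in R); case: (y \in L 0).
case: ifP => _; last reflexivity.
apply: (f_equal (fun A => num_tilings A _)); apply/setP=> [[a i]]; rewrite !inE /= !xpair_eqE -!val_eqE /=.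
case: (eqVneq (i : nat) 0) => [->|ne] /=; last by rewrite !andbF.
by case: (a == x); case: (a == y); case: (a \in L 0); case: (a \in R).
Qed.

Definition dec nv (b : seq bool) : {set 'I_nv} := [set i : 'I_nv | nth false b i].
Definition clr (b : seq bool) (i : nat) := set_nth false b i false.

Lemma dec_clr nv b (x : 'I_nv) : dec nv (clr b x) = dec nv b :\ x.
Proof.
by apply/setP=> i; rewrite !inE /clr nth_set_nth /= -val_eqE /=; case: (_ == _).
Qed.

Fixpoint expand (nv : nat) (step : seq bool -> seq bool -> nat -> seq (seq bool * seq bool))
   (fuel : nat) (b c : seq bool) : seq (seq bool * seq bool) :=
  match fuel with
  | 0 => [:: (b, c)]
  | n.+1 => match ohead [seq x <- iota 0 nv | nth false b x] with
            | None => [:: (b, c)]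
            | Some x => flatten [seq expand nv step n p.1 p.2 | p <- step b c x]
            end
  end.

Lemma sumn_flatten_map (T : Type) (f : T -> nat) (L : seq (seq T)) :
  sumn [seq f p | p <- flatten L] = sumn [seq sumn [seq f p | p <- l] | l <- L].
Proof. by elim: L => //= l L IH; rewrite map_cat sumn_cat IH. Qed.

Lemma expandP nv step (h : seq bool -> seq bool -> nat) :
  (forall b c x, x < nv -> nth false b x -> h b c = sumn [seq h p.1 p.2 | p <- step b c x]) ->
  forall fuel b c, h b c = sumn [seq h p.1 p.2 | p <- expand nv step fuel b c].
Proof.
move=> HS; elim=> [|n IH] b c /=; first by rewrite addn0.
case E: (ohead _) => [x|] /=; last by rewrite addn0.
have : x \in [seq x <- iota 0 nv | nth false b x].
  by move: E; case: [seq x <- iota 0 nv | nth false b x] => //= a l [->]; rewrite mem_head.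
rewrite mem_filter mem_iota add0n => /andP[bx xn].
rewrite (HS b c x xn bx) sumn_flatten_map -map_comp.
by congr sumn; apply: eq_map => p /=; rewrite -IH.
Qed.

Lemma sum_ord_iota nv (P : nat -> bool) (F : nat -> nat) :
  \sum_(y < nv | P y) F y = sumn [seq F y | y <- iota 0 nv & P y].
Proof.
rewrite -(big_mkord P F) /index_iota subn0 -big_filter sumnE big_map.
by [].
Qed.

Definition stepG nv (enat : nat -> nat -> bool) (D : seq bool) (b c : seq bool) (x : nat) :=
  [seq (clr (clr b x) y, c) | y <- iota 0 nv & nth false b y && enat x y && (y != x)]
  ++ (if nth false c x && nth false D x then [:: (clr b x, clr c x)] else [::]).

Definition step0 nv (enat : nat -> nat -> bool) (D : seq bool) (b c : seq bool) (x : nat) :=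
  if nth false D x then
   [seq (clr (clr b x) y, c) | y <- iota 0 nv & nth false b y && nth false D y && enat x y && (y != x)]
  else [:: (clr b x, c)].

Lemma bridgeX nv (e : rel 'I_nv) (enat : nat -> nat -> bool) m (L : nat -> {set 'I_nv}) k D :
  symmetric e -> (forall i j : 'I_nv, e i j = enat i j) ->
  k.+1 < m -> (forall y, y \in L k.+1) -> (forall i : 'I_nv, nth false D i = (i \in L k)) ->
  forall b c x, x < nv -> nth false b x ->
  num_tilings (Xs m L k (dec nv b) (dec nv c)) (cart_rel e (@path_rel m)) =
  sumn [seq num_tilings (Xs m L k (dec nv p.1) (dec nv p.2)) (cart_rel e (@path_rel m))
         | p <- stepG nv enat D b c x].
Proof.
move=> es ee km Lk1 HD b c x xn bx.
set xo := Ordinal xn.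
have xR : xo \in dec nv b by rewrite inE.
rewrite (stepX (dec nv c) es km xR (Lk1 xo)) /stepG map_cat sumn_cat -map_comp.
congr (_ + _).
  rewrite -(sum_ord_iota nv (fun y => nth false b y && enat x y && (y != x))
     (fun y => num_tilings (Xs m L k (dec nv (clr (clr b x) y)) (dec nv c)) (cart_rel e (@path_rel m)))).
  apply: eq_big => [y|y _]; first by rewrite inE Lk1 ee -val_eqE /= andbA.
  by rewrite -!dec_clr.
rewrite inE -HD /=.
case: ifP => _ /=; last by [].
by rewrite addn0 -!dec_clr.
Qed.

Lemma bridgeY0 nv (e : rel 'I_nv) (enat : nat -> nat -> bool) m (L : nat -> {set 'I_nv}) D :
  symmetric e -> (forall i j : 'I_nv, e i j = enat i j) -> 0 < m ->
  (forall i : 'I_nv, nth false D i = (i \in L 0)) ->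
  forall b c x, x < nv -> nth false b x ->
  num_tilings (Ys m L 0 (dec nv b)) (cart_rel e (@path_rel m)) =
  sumn [seq num_tilings (Ys m L 0 (dec nv p.1)) (cart_rel e (@path_rel m))
         | p <- step0 nv enat D b c x].
Proof.
move=> es ee m0 HD b c x xn bx.
set xo := Ordinal xn.
have xR : xo \in dec nv b by rewrite inE.
rewrite /step0; have -> : nth false D x = (xo \in L 0) by rewrite -HD.
case: ifP => xL.
  rewrite (stepY0 es m0 xR xL) -map_comp.
  rewrite -(sum_ord_iota nv (fun y => nth false b y && nth false D y && enat x y && (y != x))
     (fun y => num_tilings (Ys m L 0 (dec nv (clr (clr b x) y))) (cart_rel e (@path_rel m)))).
  apply: eq_big => [y|y _]; first by rewrite inE HD ee -val_eqE /= !andbA.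
  by rewrite -!dec_clr.
rewrite /= addn0 -[x]/(nat_of_ord xo) dec_clr -Y0_notL //; by rewrite xL.
Qed.

Definition eK (x y : nat) := (x == 0) != (y == 0).
Definition eC (x y : nat) := x != y.
Definition phi (c : seq bool) : seq bool :=
  match c with
  | [:: false; false; false] => [:: false; false; false; false]
  | [:: true; false; false] => [:: false; true; true; false]
  | [:: false; true; false] => [:: false; true; false; true]
  | [:: false; false; true] => [:: false; false; true; true]
  | [:: true; true; false] => [:: true; true; false; false]
  | [:: true; false; true] => [:: true; false; true; false]
  | [:: false; true; true] => [:: true; false; false; true]
  | _ => [:: true; true; true; true]
  end.
Definition allC : seq (seq bool) :=
  [:: [:: false; false; false]; [:: true; false; false]; [:: false; true; false];
      [:: false; false; true]; [:: true; true; false]; [:: true; false; true];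
      [:: false; true; true]; [:: true; true; true]].
Definition fullK := nseq 4 true.
Definition fullC := nseq 3 true.
Definition expK D c := expand 4 (stepG 4 eK D) 10 c fullK.
Definition expC D c := expand 3 (stepG 3 eC D) 10 c fullC.

Definition check_step :=
  all (fun c => [&& all (fun p => p.1 == nseq 4 false) (expK fullK (phi c)),
                    all (fun p => (p.1 == nseq 3 false) && (size p.2 == 3)) (expC fullC c)
                  & perm_eq (map snd (expK fullK (phi c))) (map (fun p => phi p.2) (expC fullC c))])
      allC.

Lemma dec_nseq_false nv : dec nv (nseq nv false) = set0.
Proof. by apply/setP=> i; rewrite !inE nth_nseq; case: (_ < _). Qed.

Lemma dec_nseq_true nv : dec nv (nseq nv true) = setT.
Proof. by apply/setP=> i; rewrite !inE nth_nseq ltn_ord. Qed.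

Lemma sumn_ones (T : Type) (s : seq T) : sumn [seq 1 | _ <- s] = size s.
Proof. by elim: s => //= _ s ->. Qed.

Lemma G0_count nv (e : rel 'I_nv) (enat : nat -> nat -> bool) m (L : nat -> {set 'I_nv}) D c :
  symmetric e -> (forall i j : 'I_nv, e i j = enat i j) -> 0 < m ->
  (forall i : 'I_nv, nth false D i = (i \in L 0)) ->
  all (fun p => p.1 == nseq nv false) (expand nv (step0 nv enat D) 10 c c) ->
  num_tilings (Ys m L 0 (dec nv c)) (cart_rel e (@path_rel m)) =
  size (expand nv (step0 nv enat D) 10 c c).
Proof.
move=> es ee m0 HD /allP Hl.
rewrite (expandP (h := fun b (_ : seq bool) => num_tilings (Ys m L 0 (dec nv b)) (cart_rel e (@path_rel m)))
   (bridgeY0 es ee m0 HD) 10 c c) -sumn_ones.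
congr sumn; apply/eq_in_map => p /Hl /eqP ->.
by rewrite dec_nseq_false Y00 nt0.
Qed.

Lemma expX_leaves nv (e : rel 'I_nv) (enat : nat -> nat -> bool) m (L : nat -> {set 'I_nv}) k D c :
  symmetric e -> (forall i j : 'I_nv, e i j = enat i j) ->
  k.+1 < m -> (forall y, y \in L k.+1) -> (forall i : 'I_nv, nth false D i = (i \in L k)) ->
  all (fun p => p.1 == nseq nv false) (expand nv (stepG nv enat D) 10 c (nseq nv true)) ->
  num_tilings (Ys m L k.+1 (dec nv c)) (cart_rel e (@path_rel m)) =
  sumn [seq num_tilings (Ys m L k (dec nv p.2)) (cart_rel e (@path_rel m))
        | p <- expand nv (stepG nv enat D) 10 c (nseq nv true)].
Proof.
move=> es ee km Lk1 HD /allP Hl.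
rewrite -XT -(dec_nseq_true nv).
rewrite (expandP (h := fun b c => num_tilings (Xs m L k (dec nv b) (dec nv c)) (cart_rel e (@path_rel m)))
   (bridgeX es ee km Lk1 HD) 10 c (nseq nv true)).
congr sumn; apply/eq_in_map => p /Hl /eqP ->.
by rewrite dec_nseq_false X0S.
Qed.

Lemma K13_sym : symmetric K13_rel.
Proof. by move=> x y; rewrite /K13_rel eq_sym. Qed.
Lemma C3_sym : symmetric C3_rel.
Proof. by move=> x y; rewrite /C3_rel eq_sym. Qed.
Lemma K13_e (i j : 'I_4) : K13_rel i j = eK i j.
Proof. by []. Qed.
Lemma C3_e (i j : 'I_3) : C3_rel i j = eC i j.
Proof. by rewrite /C3_rel /eC -val_eqE. Qed.

Definition GK m (L : nat -> {set 'I_4}) k c :=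
  num_tilings (Ys m L k (dec 4 c)) (cart_rel K13_rel (@path_rel m)).
Definition GC m (L : nat -> {set 'I_3}) k c :=
  num_tilings (Ys m L k (dec 3 c)) (cart_rel C3_rel (@path_rel m)).

Definition Inv m (LK : nat -> {set 'I_4}) (LC : nat -> {set 'I_3}) k := forall c, c \in allC -> GK m LK k (phi c) = GC m LC k c.

Lemma check_step_ok : check_step.
Proof. by vm_compute. Qed.

Lemma inv_step m (LK : nat -> {set 'I_4}) (LC : nat -> {set 'I_3}) k : k.+1 < m ->
  (forall y, y \in LK k.+1) -> (forall y, y \in LK k) ->
  (forall y, y \in LC k.+1) -> (forall y, y \in LC k) ->
  Inv m LK LC k -> Inv m LK LC k.+1.
Proof.
move=> km K1 K0 C1 C0 IH c cin.
move/allP: check_step_ok => /(_ c cin) /and3P[lk lc pp].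
have lk' : all (fun p => p.1 == nseq 4 false) (expand 4 (stepG 4 eK fullK) 10 (phi c) (nseq 4 true)) by [].
have lc' : all (fun p => p.1 == nseq 3 false) (expand 3 (stepG 3 eC fullC) 10 c (nseq 3 true)).
  by apply/allP=> p /(allP lc) /andP[].
rewrite /GK /GC (expX_leaves K13_sym K13_e km K1 _ lk'); last by move=> i; rewrite nth_nseq ltn_ord K0.
rewrite (expX_leaves C3_sym C3_e km C1 _ lc'); last by move=> i; rewrite nth_nseq ltn_ord C0.
have -> : [seq num_tilings (Ys m LK k (dec 4 p.2)) (cart_rel K13_rel (path_rel (m:=m)))
            | p <- expand 4 (stepG 4 eK fullK) 10 (phi c) (nseq 4 true)]
        = [seq GK m LK k q | q <- map snd (expK fullK (phi c))] by rewrite -map_comp.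
rewrite (perm_sumn (perm_map _ pp)) -!map_comp.
congr sumn; apply/eq_in_map => p /(allP lc) /andP[_ /eqP sz] /=.
apply: IH; move: sz; case: p.2 => [|a [|b [|d []]]] //= _.
by case: a; case: b; case: d.
Qed.

Definition exp0K D c := expand 4 (step0 4 eK D) 10 c c.
Definition exp0C D c := expand 3 (step0 3 eC D) 10 c c.
Definition ok0K D c := all (fun p => p.1 == nseq 4 false) (exp0K D c).
Definition ok0C D c := all (fun p => p.1 == nseq 3 false) (exp0C D c).

Definition check_base DK DC :=
  all (fun c => [&& ok0K DK (phi c), ok0C DC c & size (exp0K DK (phi c)) == size (exp0C DC c)]) allC.

Definition DK0 := [:: true; false; false; true].
Definition DC0 := [:: false; true; true].

Definition check_r1 :=
  all (fun c => [&& all (fun p => p.1 == nseq 4 false) (expK DK0 (phi c)),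
                    all (fun p => p.1 == nseq 3 false) (expC DC0 c),
                    all (fun p => ok0K DK0 p.2) (expK DK0 (phi c)),
                    all (fun p => ok0C DC0 p.2) (expC DC0 c) &
                    sumn [seq size (exp0K DK0 p.2) | p <- expK DK0 (phi c)] ==
                    sumn [seq size (exp0C DC0 p.2) | p <- expC DC0 c]]) allC.

Lemma check_base_full : check_base fullK fullC.
Proof. by vm_compute. Qed.
Lemma check_base_r : check_base DK0 DC0.
Proof. by vm_compute. Qed.
Lemma check_r1_ok : check_r1.
Proof. by vm_compute. Qed.

Lemma inv_base m (LK : nat -> {set 'I_4}) (LC : nat -> {set 'I_3}) DK DC : 0 < m ->
  (forall i : 'I_4, nth false DK i = (i \in LK 0)) ->
  (forall i : 'I_3, nth false DC i = (i \in LC 0)) ->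
  check_base DK DC -> Inv m LK LC 0.
Proof.
move=> m0 HK HC /allP H c cin; case/and3P: (H c cin) => k1 c1 /eqP E.
by rewrite /GK /GC (G0_count K13_sym K13_e m0 HK k1) (G0_count C3_sym C3_e m0 HC c1).
Qed.

Lemma inv_r1 m (LK : nat -> {set 'I_4}) (LC : nat -> {set 'I_3}) : 1 < m ->
  (forall y, y \in LK 1) -> (forall y, y \in LC 1) ->
  (forall i : 'I_4, nth false DK0 i = (i \in LK 0)) ->
  (forall i : 'I_3, nth false DC0 i = (i \in LC 0)) ->
  Inv m LK LC 1.
Proof.
move=> m1 K1 C1 HK HC c cin.
have m0 : 0 < m by apply: ltnW.
move/allP: check_r1_ok => /(_ c cin) /and5P[lk lc ok1 ok2 /eqP E].
rewrite /GK /GC (expX_leaves K13_sym K13_e m1 K1 HK lk) (expX_leaves C3_sym C3_e m1 C1 HC lc).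
have -> : [seq num_tilings (Ys m LK 0 (dec 4 p.2)) (cart_rel K13_rel (path_rel (m:=m)))
            | p <- expand 4 (stepG 4 eK DK0) 10 (phi c) (nseq 4 true)]
        = [seq size (exp0K DK0 p.2) | p <- expK DK0 (phi c)].
  by apply/eq_in_map => p /(allP ok1) okp; rewrite (G0_count K13_sym K13_e m0 HK okp).
have -> : [seq num_tilings (Ys m LC 0 (dec 3 p.2)) (cart_rel C3_rel (path_rel (m:=m)))
            | p <- expand 3 (stepG 3 eC DC0) 10 c (nseq 3 true)]
        = [seq size (exp0C DC0 p.2) | p <- expC DC0 c].
  by apply/eq_in_map => p /(allP ok2) okp; rewrite (G0_count C3_sym C3_e m0 HC okp).
exact: E.
Qed.

Definition LKr (i : nat) : {set 'I_4} := [set x : 'I_4 | ~~ ((i == 0) && ((x == 1 :> nat) || (x == 2 :> nat)))].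
Definition LCr (i : nat) : {set 'I_3} := [set x : 'I_3 | ~~ ((i == 0) && (x == 0 :> nat))].

Lemma inv_all_full m k : k < m -> Inv m (fun _ => setT) (fun _ => setT) k.
Proof.
elim: k => [m0|k IH km].
  apply: inv_base check_base_full => //= i; by rewrite nth_nseq ltn_ord inE.
apply: inv_step => //; try (by move=> y; rewrite inE); apply: IH; exact: ltnW.
Qed.

Lemma inv_all_r m k : k < m -> Inv m LKr LCr k.
Proof.
elim: k => [m0|k IH km].
  by apply: inv_base check_base_r => //; case=> [[|[|[|[|i]]]] Hi]; rewrite ?inE.
case: k IH km => [_ m1|k IH km].
  by apply: inv_r1 => //; try (by move=> y; rewrite inE); case=> [[|[|[|[|i]]]] Hi]; rewrite ?inE.
apply: inv_step => //; try (by move=> y; rewrite inE); apply: IH; exact: ltnW.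
Qed.

Theorem theorem9 :
  (forall n : nat, 1 <= n -> Qn n = Tn n) /\ (forall n : nat, qn n = tn n).
Proof.
split.
  move=> n n1; set m := 2 * n.
  have m0 : 0 < m by rewrite /m; lia.
  have km : m.-1 < m by rewrite /m; lia.
  have EK : [set: 'I_4 * 'I_m] = Ys m (fun _ => setT) m.-1 (dec 4 (phi fullC)).
    apply/setP=> [[a i]]; rewrite dec_nseq_true !inE /=.
    have := ltn_ord i; rewrite andbT; move=> hi; apply/esym/orP; lia.
  have EC : [set: 'I_3 * 'I_m] = Ys m (fun _ => setT) m.-1 (dec 3 fullC).
    apply/setP=> [[a i]]; rewrite dec_nseq_true !inE /=.
    have := ltn_ord i; rewrite andbT; move=> hi; apply/esym/orP; lia.
  rewrite /Qn /Tn -/m EK EC.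
  exact: (inv_all_full km (c := fullC)).
move=> n; set m := 2 * n + 1.
have km : 2 * n < m by rewrite /m addn1.
have EK : [set p : 'I_4 * 'I_m | ~~ ((p.2 == 0 :> nat) && ((p.1 == 1 :> nat) || (p.1 == 2 :> nat)))]
          = Ys m LKr (2 * n) (dec 4 (phi fullC)).
  apply/setP=> [[a i]]; rewrite dec_nseq_true !inE /= andbT.
  have hi := ltn_ord i.
  suff -> : (i < 2 * n) || ((i : nat) == 2 * n) by rewrite andbT.
  move: hi; rewrite /m; move: (nat_of_ord i) => j hj; apply/orP; lia.
have EC : [set p : 'I_3 * 'I_m | ~~ ((p.2 == 0 :> nat) && (p.1 == 0 :> nat))]
          = Ys m LCr (2 * n) (dec 3 fullC).
  apply/setP=> [[a i]]; rewrite dec_nseq_true !inE /= andbT.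
  have hi := ltn_ord i.
  suff -> : (i < 2 * n) || ((i : nat) == 2 * n) by rewrite andbT.
  move: hi; rewrite /m; move: (nat_of_ord i) => j hj; apply/orP; lia.
rewrite /qn /tn -/m EK EC.
exact: (inv_all_r km (c := fullC)).
Qed.
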